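(* Let $n$ be a positive integer, $m=1$, $A\in\mathbb{C}^{n\times n}$, $B\in\mathbb{C}^{n\times 1}$ nonzero, $(A,B)$ reachable and all eigenvalues of $A$ of modulus $<1$. Let $\mathbf{R}\in\mathbb{C}^{n\times n}$ be Hermitian, $\mathbf{R}\geq0$ and singular, with $\mathbf{R}-A\mathbf{R}A^*=BH+H^*B^*$ for some $H\in\mathbb{C}^{1\times n}$. Then $B^*\Pi_{\mathcal{N}(\mathbf{R})}B$ is invertible (i.e. nonzero).
   Context: $\mathcal{N}(\mathbf{R})$ is the null space of $\mathbf{R}$ and $\Pi_{\mathcal{N}(\mathbf{R})}$ the orthogonal projection onto it. $(A,B)$ reachable means $\operatorname{rank}[B,AB,\dots,A^{n-1}B]=n$. *)

(* Defs.v *)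
From mathcomp Require Import all_boot all_algebra.
From mathcomp Require Import reals complex.
Set Implicit Arguments. Unset Strict Implicit. Unset Printing Implicit Defensive.
Import GRing.Theory Num.Theory.
Local Open Scope ring_scope.

Section Defs.
Variable C : numClosedFieldType.

Definition ctmx (m n : nat) (A : 'M[C]_(m, n)) : 'M[C]_(n, m) :=
  (map_mx Num.conj A)^T.

Definition is_hermitian (n : nat) (M : 'M[C]_n) : Prop := ctmx M = M.

Definition psd (n : nat) (M : 'M[C]_n) : Prop :=
  is_hermitian M /\ forall x : 'cV[C]_n, 0 <= (ctmx x *m M *m x) 0 0.

Definition ctrb (n : nat) (A : 'M[C]_n) (B : 'cV[C]_n) : 'M[C]_n :=
  \matrix_(i < n, j < n) ((A ^+ j *m B) i ord0).

Definition reachable (n : nat) (A : 'M[C]_n) (B : 'cV[C]_n) : Prop :=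
  \rank (ctrb A B) = n.

Definition is_orth_proj_null (n : nat) (M P : 'M[C]_n) : Prop :=
  [/\ P *m P = P, ctmx P = P &
      forall x : 'cV[C]_n, M *m x = 0 <-> P *m x = x].

End Defs.

(* Main.v *)
Require Import Defs.
From mathcomp Require Import all_boot all_algebra.
From mathcomp Require Import reals complex.
From mathcomp Require Import ring.
From mathcomp Require Import order.
Import Order.TTheory GRing.Theory Num.Theory.
Local Open Scope ring_scope.
Set Implicit Arguments. Unset Strict Implicit.

Section Gen.
Variable C : numClosedFieldType.

Lemma ctmxM m n p (A : 'M[C]_(m,n)) (B : 'M[C]_(n,p)) : ctmx (A *m B) = ctmx B *m ctmx A.
Proof. by rewrite /ctmx map_mxM trmx_mul. Qed.

Lemma ctmxK m n (A : 'M[C]_(m,n)) : ctmx (ctmx A) = A.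
Proof. by apply/matrixP => i j; rewrite !mxE conjCK. Qed.

Lemma ctmx0 m n : ctmx (0 : 'M[C]_(m,n)) = 0.
Proof. by apply/matrixP => i j; rewrite !mxE rmorph0. Qed.

Lemma ctmxD m n (A B : 'M[C]_(m,n)) : ctmx (A + B) = ctmx A + ctmx B.
Proof. by apply/matrixP => i j; rewrite !mxE rmorphD. Qed.

Lemma ctmxZ m n k (A : 'M[C]_(m,n)) : ctmx (k *: A) = k^* *: ctmx A.
Proof. by apply/matrixP => i j; rewrite !mxE rmorphM. Qed.

Lemma normsq n (v : 'cV[C]_n) : (ctmx v *m v) 0 0 = \sum_i `|v i 0| ^+ 2.
Proof. by rewrite !mxE; apply: eq_bigr => k _; rewrite !mxE normCKC. Qed.

Lemma normsq_ge0 n (v : 'cV[C]_n) : 0 <= (ctmx v *m v) 0 0.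
Proof. by rewrite normsq; apply: sumr_ge0 => i _; rewrite exprn_ge0. Qed.

Lemma normsq_eq0 n (v : 'cV[C]_n) : (ctmx v *m v) 0 0 = 0 -> v = 0.
Proof.
rewrite normsq => /psumr_eq0P H; apply/matrixP => i j.
have /(_ i isT) := H (fun i _ => exprn_ge0 2 (normr_ge0 _)).
by rewrite (ord1 j) mxE => /eqP; rewrite sqrf_eq0 normr_eq0 => /eqP.
Qed.

Definition sf n (M : 'M[C]_n) (x y : 'cV[C]_n) := (ctmx x *m M *m y) 0 0.
Arguments sf {n}.

Lemma sfDl n (M : 'M[C]_n) (x y z : 'cV[C]_n) : sf M (x + y) z = sf M x z + sf M y z.
Proof. by rewrite /sf ctmxD !mulmxDl mxE. Qed.
Lemma sfDr n (M : 'M[C]_n) (x y z : 'cV[C]_n) : sf M z (x + y) = sf M z x + sf M z y.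
Proof. by rewrite /sf !mulmxDr mxE. Qed.
Lemma sfZl n (M : 'M[C]_n) k (x z : 'cV[C]_n) : sf M (k *: x) z = k^* * sf M x z.
Proof. by rewrite /sf ctmxZ -!scalemxAl mxE. Qed.
Lemma sfZr n (M : 'M[C]_n) k (x z : 'cV[C]_n) : sf M z (k *: x) = k * sf M z x.
Proof. by rewrite /sf -!scalemxAr mxE. Qed.

Lemma psd_ker n (M : 'M[C]_n) (v : 'cV[C]_n) :
  psd M -> (ctmx v *m M *m v) 0 0 = 0 -> M *m v = 0.
Proof.
move=> [Hh Hp] H0.
set w := M *m v.
have ctw : ctmx w = ctmx v *m M by rewrite /w ctmxM Hh.
set a := (ctmx w *m w) 0 0.
set c := sf M w w.
have a0 : 0 <= a := normsq_ge0 w.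
have c0 : 0 <= c := Hp w.
have fvv : sf M v v = 0 by [].
have fvw : sf M v w = a by rewrite /sf /a ctw /w !mulmxA.
have fwv : sf M w v = a by rewrite /sf /a /w !mulmxA.
set u := (c + 1) *: v + (- a) *: w.
have := Hp u.
have -> : (ctmx u *m M *m u) 0 0 = sf M u u by [].
rewrite /u !sfDl !sfDr !sfZl !sfZr fvv fvw fwv -/c.
have e1 : (c + 1)^* = c + 1 by apply: geC0_conj; rewrite addr_ge0.
have e2 : (- a)^* = - a by rewrite rmorphN; congr (- _); exact: geC0_conj.
rewrite e1 e2 => H1.
have H : 0 <= - (a ^+ 2 * (c + 2)).
  by apply: (le_trans H1); rewrite le_eqVlt; apply/orP; left; apply/eqP; ring.
move: H; rewrite oppr_ge0 => H.
have c2 : 0 < c + 2 by apply: ltr_wpDl.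
have : a ^+ 2 <= 0 by rewrite -(pmulr_lle0 _ c2).
have : 0 <= a ^+ 2 by apply: exprn_ge0.
move=> h1 h2; have : a ^+ 2 = 0 by apply/eqP; rewrite eq_le h2 h1.
move/eqP; rewrite sqrf_eq0 => /eqP; exact: normsq_eq0.
Qed.

End Gen.

Theorem proposition4 (R : realType) (n : nat) (A : 'M[R[i]]_n) (B : 'cV[R[i]]_n)
    (RR : 'M[R[i]]_n) (P : 'M[R[i]]_n) :
  (0 < n)%N ->
  B != 0 ->
  reachable A B ->
  (forall lambda : R[i], eigenvalue A lambda -> `|lambda| < 1) ->
  is_hermitian RR ->
  psd RR ->
  \det RR = 0 ->
  (exists H : 'rV[R[i]]_n,
      RR - A *m RR *m ctmx A = B *m H + ctmx H *m ctmx B) ->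
  is_orth_proj_null RR P ->
  ctmx B *m P *m B \in unitmx.
Proof.
move=> _ _ reach _ Hh Hpsd detR [H EH] [PP Ph Pker].
rewrite unitmxE unitfE det_mx11; apply/eqP => H0.
have PB : P *m B = 0.
  apply: normsq_eq0; by rewrite -H0 ctmxM Ph mulmxA -(mulmxA _ P P) PP.
have xB : forall x : 'cV[R[i]]_n, RR *m x = 0 -> ctmx x *m B = 0.
  move=> x /(proj1 (Pker x)) Px; by rewrite -Px ctmxM Ph -mulmxA PB mulmx0.
have inv : forall x : 'cV[R[i]]_n, RR *m x = 0 -> RR *m (ctmx A *m x) = 0.
  move=> x Rx; apply: psd_ker => //.
  have := congr1 (fun M => ctmx x *m M *m x) EH.
  rewrite mulmxBr mulmxBl mulmxDr mulmxDl -(mulmxA _ RR x) Rx mulmx0 sub0r.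
  have Bx : ctmx B *m x = 0 by rewrite -[x]ctmxK -ctmxM xB // ctmx0.
  rewrite !mulmxA (xB x Rx) !mul0mx add0r -(mulmxA _ (ctmx B) x) Bx mulmx0 => /eqP.
  rewrite ?addr0 oppr_eq0 => /eqP E.
  by rewrite ctmxM ctmxK E mxE.
have pw : forall k (x : 'cV[R[i]]_n), RR *m x = 0 -> ctmx x *m (A ^+ k *m B) = 0.
  elim=> [|k IH] x Rx; first by rewrite expr0 mul1mx xB.
  rewrite exprS -mulmxE -(mulmxA A) (mulmxA (ctmx x)).
  have -> : ctmx x *m A = ctmx (ctmx A *m x) by rewrite ctmxM ctmxK.
  by apply: IH; apply: inv.
move/eqP: detR => /det0P [v v0 vR].
have Rx : RR *m ctmx v = 0 by rewrite -Hh -ctmxM vR ctmx0.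
have : ctmx (ctmx v) *m ctrb A B = 0.
  apply/matrixP => i j.
  have := congr1 (fun M : 'M[R[i]]_1 => M i 0) (pw j _ Rx).
  rewrite mxE [RHS]mxE => E; rewrite mxE [RHS]mxE; apply: (etrans _ E).
  by apply: eq_bigr => k _; rewrite /ctrb mxE.
move/eqP; rewrite mulmx_free_eq0 ?ctmxK; first by apply/negP.
by rewrite /row_free reach.
Qed.
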